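(* Let $S=\{x_1,\ldots,x_n\}$ be a factor-closed set of $n$ distinct positive integers, let $k\in\mathbb{N}$, and let $F(r;n_1,\ldots,n_k)$ ($r,n_1,\ldots,n_k\in\mathbb{N}$) be even $\pmod r$ with respect to $n_1,\ldots,n_k$. Let $I=\{2,3,\ldots,k+1\}$ if $k$ is even and $I=\{1,2,\ldots,k+1\}$ if $k$ is odd. Then \[ \det_I\bigl(F(x_{i_1};x_{i_2},\ldots,x_{i_{k+1}})\bigr)_{1\le i_1,\ldots,i_{k+1}\le n}=(x_1\cdots x_n)^k\prod_{v=1}^n\alpha_{x_v}(x_v,\ldots,x_v). \]
   Context: A set $S$ of positive integers is factor-closed if every positive divisor of every element of $S$ lies in $S$. $F$ is even $\pmod r$ if $F(r;n_1,\ldots,n_k)=F(r;\gcd(n_1,r),\ldots,\gcd(n_k,r))$ for all $r,n_1,\ldots,n_k$. $c(k,n):=\sum_{d\mid\gcd(k,n)}\mu(k/d)\,d$ is the Ramanujan sum. The finite Fourier coefficients are, for $d_1,\ldots,d_k\mid r$, \[ \alpha_r(d_1,\ldots,d_k):=\frac{1}{r^k}\sum_{\delta_1,\ldots,\delta_k\mid r}F(r;\delta_1,\ldots,\delta_k)\,c\Bigl(\frac{r}{\delta_1},\frac{r}{d_1}\Bigr)\cdots c\Bigl(\frac{r}{\delta_k},\frac{r}{d_k}\Bigr). \] For a $K$-dimensional matrix $A$ of order $n$ and $J\subseteq\{1,\ldots,K\}$, with $\eta_j=1$ if $j\in J$ and $0$ otherwise, the hyperdeterminant is $\det_JA:=\frac{1}{n!}\sum_{\sigma_1,\ldots,\sigma_K\in\mathfrak{S}_n}\prod_{j=1}^K\mathrm{sgn}(\sigma_j)^{\eta_j}\prod_{v=1}^nA(\sigma_1(v),\ldots,\sigma_K(v))$,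 $\mathfrak{S}_n$ the symmetric group on $\{1,\ldots,n\}$. *)

(* Defs.v *)
From mathcomp Require Import all_boot all_order all_algebra all_fingroup.
Set Implicit Arguments. Unset Strict Implicit. Unset Printing Implicit Defensive.
Import GRing.Theory Num.Theory.
Local Open Scope ring_scope.

Definition squarefree (n : nat) : bool := all (fun p => logn p n == 1)%N (primes n).
Definition mobius (n : nat) : int :=
  if (n == 0)%N then 0
  else if squarefree n then (-1) ^+ size (primes n) else 0.

Definition ramanujan (k n : nat) : int :=
  \sum_(d <- divisors (gcdn k n)) mobius (k %/ d)%N * (d%:Z).

Definition factor_closed (n : nat) (x : 'I_n -> nat) : Prop :=
  (forall v, (0 < x v)%N) /\
  (forall v d, (d %| x v)%N -> exists w, x w = d).

Definition even_mod (R : Type) (k : nat) (F : nat -> ('I_k -> nat) -> R) : Prop :=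
  forall r (ns : 'I_k -> nat), F r ns = F r (fun j => gcdn (ns j) r).

Definition alpha (R : numFieldType) (k : nat) (F : nat -> ('I_k -> nat) -> R)
    (r : nat) (d : 'I_k -> nat) : R :=
  ((r%:R ^+ k)^-1) *
  \sum_(delta : {ffun 'I_k -> 'I_r.+1} | [forall j, (0 < delta j)%N && (delta j %| r)%N])
     F r (fun j => nat_of_ord (delta j)) *
     \prod_(j < k) ((ramanujan (r %/ delta j) (r %/ d j))%:~R).

Definition hyperdet (R : numFieldType) (K n : nat) (J : pred 'I_K)
    (A : ('I_K -> 'I_n) -> R) : R :=
  ((n`!)%:R)^-1 *
  \sum_(sigma : {ffun 'I_K -> {perm 'I_n}})
     (\prod_(j < K) (if J j then (-1) ^+ (odd_perm (sigma j)) else 1)) *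
     \prod_(v < n) A (fun j => sigma j v).

(* Main.v *)
Require Import Defs.
From mathcomp Require Import all_boot all_order all_algebra all_fingroup.
Import GRing.Theory Num.Theory.
From mathcomp Require Import zify.
From Stdlib Require Import FunctionalExtensionality.
Set Implicit Arguments. Unset Strict Implicit. Unset Printing Implicit Defensive.

Lemma primes_pM p d : prime p -> 0 < d -> ~~ (p %| d) ->
  perm_eq (primes (p * d)) (p :: primes d).
Proof.
move=> pp d0 npd; have p0 := prime_gt0 pp.
apply: uniq_perm; first exact: primes_uniq.
  by rewrite /= primes_uniq andbT mem_primes (negbTE npd) !andbF.
move=> q; rewrite in_cons primesM // (mem_primes q p) p0 /=.
case: (boolP (prime q)) => [qq|nq]; first by rewrite dvdn_prime2 // (eq_sym q).
rewrite (mem_primes q d) (negbTE nq) /=; case: eqP => // E; by move: nq; rewrite E pp.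
Qed.

Lemma mobius_pM p d : prime p -> 0 < d -> ~~ (p %| d) ->
  mobius (p * d) = (- mobius d)%R.
Proof.
move=> pp d0 npd; have p0 := prime_gt0 pp.
have hP := primes_pM pp d0 npd.
rewrite /mobius muln_eq0 (negbTE (lt0n_neq0 p0)) (negbTE (lt0n_neq0 d0)) /=.
rewrite (perm_size hP) /squarefree (perm_all _ hP) /=.
rewrite lognM // logn_prime // eqxx.
have -> : logn p d = 0 by rewrite lognE (negbTE npd) !andbF.
rewrite /=.
have -> : all (fun q => logn q (p * d) == 1) (primes d) = all (fun q => logn q d == 1) (primes d).
  apply: eq_in_all => q; rewrite mem_primes => /and3P [qq _ qd].
  rewrite lognM // logn_prime //.
  have -> : (q == p) = false by apply/eqP => E; move: npd; rewrite -E qd.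
  by [].
by case: ifP => _; rewrite ?exprS ?mulN1r ?oppr0.
Qed.

Lemma mobius_p2 p d : prime p -> 0 < d -> p %| d -> mobius (p * d) = 0%R.
Proof.
move=> pp d0 pd; have p0 := prime_gt0 pp.
rewrite /mobius muln_eq0 (negbTE (lt0n_neq0 p0)) (negbTE (lt0n_neq0 d0)) /=.
rewrite /squarefree.
have -> : all (fun q => logn q (p * d) == 1) (primes (p * d)) = false.
  apply/negbTE/allPn; exists p; first by rewrite mem_primes pp muln_gt0 p0 d0 dvdn_mulr.
  rewrite lognM // logn_prime // eqxx.
  by rewrite lognE pp d0 pd.
by [].
Qed.

Lemma inordE N m : nat_of_ord (inord m : 'I_N.+1) = if m < N.+1 then m else 0.
Proof. by rewrite /inord val_insubd. Qed.

Lemma mobius_sum0 m : 1 < m -> (\sum_(d < m.+1 | (d %| m)%N) mobius d)%R = 0%R.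
Proof.
move=> m1; have m0 : 0 < m by lia.
set p := pdiv m; have pp : prime p := pdiv_prime m1.
have pm : p %| m := pdiv_dvd m; have p0 := prime_gt0 pp.
rewrite (bigID (fun d : 'I_m.+1 => dvdn p d)) /=.
rewrite (bigID (fun d : 'I_m.+1 => dvdn p (divn d p))) /=.
rewrite [X in (X + _ + _)%R]big1 ?add0r; last first.
  move=> d /andP[/andP[dm pd] pdp].
  have d0 : 0 < d by apply: dvdn_gt0 dm.
  have -> : nat_of_ord d = p * (d %/ p). by rewrite mulnC; apply/esym/divnK.
  by rewrite mobius_p2 // divn_gt0 // dvdn_leq.
rewrite (reindex_onto (fun d' : 'I_m.+1 => inord (p * d') : 'I_m.+1)
                      (fun d : 'I_m.+1 => inord (divn d p)%N : 'I_m.+1)); last first.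
  move=> d /andP[/andP[dm pd] pdp]; have dle : d <= m by apply: dvdn_leq.
  apply: val_inj; rewrite /= !inordE.
  have -> : divn d p < m.+1 by apply: leq_ltn_trans (leq_div _ _) _; lia.
  by rewrite [p * _]mulnC divnK // ifT //; lia.
rewrite [X in (X + _)%R](eq_bigl (fun j : 'I_m.+1 => (j %| m) && ~~ (p %| j))); last first.
  move=> j; rewrite inordE.
  case: (ltnP (p * j) m.+1) => hj.
    rewrite /= (mulKn _ p0) inord_val eqxx dvdn_mulr //=.
    rewrite andbT; case: (boolP (p %| j)) => pj; first by rewrite !andbF.
    by rewrite !andbT Gauss_dvd ?pm // prime_coprime.
  rewrite dvd0n (negbTE (lt0n_neq0 m0)) /=.
  apply/esym/negbTE; apply/andP => [[jm npj]].
  have pjm : p * j %| m by rewrite Gauss_dvd ?pm ?jm // prime_coprime.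
  by have := dvdn_leq m0 pjm; lia.
rewrite [X in (X + _)%R](eq_bigr (fun j : 'I_m.+1 => mobius (p * j))); last first.
  move=> j /andP[jm npj].
  have pjm : p * j %| m by rewrite Gauss_dvd ?pm ?jm // prime_coprime.
  by rewrite inordE ifT //; have := dvdn_leq m0 pjm; lia.
rewrite -big_split /=; apply: big1 => j /andP[jm npj].
have j0 : 0 < j by apply: dvdn_gt0 jm.
by rewrite mobius_pM // addNr.
Qed.

Section S.
Variable (R : numFieldType) (n : nat) (x : 'I_n -> nat).
Hypothesis (xinj : injective x) (xfc : factor_closed x).

Definition idx (d0 : 'I_n) (d : nat) : 'I_n := odflt d0 [pick w | x w == d].

Lemma idxP d0 d : (exists w, x w = d) -> x (idx d0 d) = d.
Proof.
move=> [w <-]; rewrite /idx; case: pickP => [v /eqP //|/(_ w)]; by rewrite eqxx.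
Qed.

Lemma idx_x d0 w : idx d0 (x w) = w.
Proof. by apply: xinj; rewrite idxP //; exists w. Qed.

Lemma x_gt0 w : 0 < x w. Proof. by case: xfc. Qed.

Lemma idx_dvd d0 w d : d %| x w -> x (idx d0 d) = d.
Proof. by move=> dw; apply: idxP; case: xfc => _ /(_ w d dw). Qed.

Lemma sumS (V : nmodType) (c d : 'I_n) (f : nat -> V) : x c %| x d ->
  (\sum_(l | ((x c %| x l) && (x l %| x d))%N) f (x l %/ x c)%N =
   \sum_(e < (x d %/ x c)%N.+1 | (e %| x d %/ x c)%N) f e)%R.
Proof.
move=> cd; set m := x d %/ x c.
have c0 := x_gt0 c; have d0 := x_gt0 d.
have m0 : 0 < m by rewrite divn_gt0 // dvdn_leq.
have xdE : x d = x c * m by rewrite mulnC divnK.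
rewrite (reindex_onto (fun e : 'I_m.+1 => idx c (x c * e)) (fun l => inord (x l %/ x c) : 'I_m.+1)).
  apply: eq_big => [e|e /andP[/andP[h1 h2] /eqP h3]]; last first.
    have := congr1 val h3; rewrite /= inordE ifT; first by move=> ->.
    by rewrite ltnS leq_div2r // dvdn_leq.
  apply/idP/idP.
    move=> /andP[/andP[h1 h2] /eqP h3]; rewrite -h3 inordE.
    have xle : x (idx c (x c * e)) %/ x c <= m by rewrite leq_div2r // dvdn_leq.
    by rewrite ifT // -(dvdn_pmul2l c0) -xdE mulnC divnK.
  move=> em.
  have hx : x (idx c (x c * e)) = x c * e by apply: (@idx_dvd _ d _); rewrite xdE dvdn_pmul2l.
  rewrite hx dvdn_mulr //= xdE dvdn_pmul2l // em /=.
  by apply/eqP/val_inj; rewrite /= mulKn // inordE ltn_ord.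
move=> l /andP[cl ld]; apply: xinj.
have le : x l %/ x c < m.+1 by rewrite ltnS leq_div2r // dvdn_leq.
by rewrite (@idx_dvd _ d _) inordE le ?divnK // mulnC divnK.
Qed.

Definition Mm (c l : 'I_n) : R := if (x c %| x l)%N then ((mobius (x l %/ x c)%N)%:~R)%R else 0%R.
Definition Em (l b : 'I_n) : R := ((x l %| x b)%N)%:R%R.

Lemma mobius_sum m : 0 < m ->
  (\sum_(e < m.+1 | (e %| m)%N) (mobius e)%:~R = ((m == 1)%N)%:R :> R)%R.
Proof.
move=> m0; rewrite -mulrz_sumr.
case: (ltngtP m 1) => hm; first by lia.
  by rewrite mobius_sum0 // mulr0z; case: eqP => //; lia.
subst m; rewrite big_mkcond big_ord_recr /= big_ord_recr /= big_ord0 /=.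
by [].  
Qed.

Lemma ME c d : (\sum_l Mm c l * Em l d)%R = (((c == d)%N)%:R)%R.
Proof.
rewrite (eq_bigr (fun l => if ((x c %| x l) && (x l %| x d))%N
    then ((mobius (x l %/ x c)%N)%:~R)%R else 0%R)); last first.
  by move=> l _; rewrite /Mm /Em; case: (x c %| x l); case: (x l %| x d); rewrite /= ?mulr1 ?mulr0 ?mul0r.
rewrite -big_mkcond /=.
case: (boolP (x c %| x d)) => cd.
  rewrite (sumS (fun e => (((mobius e)%:~R)%R : R))) // mobius_sum; last first.
    by rewrite divn_gt0 ?x_gt0 // dvdn_leq ?x_gt0.
  congr (GRing.natmul _ _).
  have := divnK cd; case: eqP => [h|h]; case: eqP => [E|E] //.
    by rewrite h mul1n => /xinj.
  by move=> _; subst; rewrite divnn x_gt0 in h.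
rewrite big_pred0; last first.
  move=> l; apply/negbTE/andP => [[h1 h2]]; by rewrite (dvdn_trans h1 h2) in cd.
by case: eqP => // E; rewrite E dvdnn in cd.
Qed.

Variable (k : nat) (F : nat -> ('I_k -> nat) -> R).
Hypothesis Fev : even_mod F.

Local Open Scope ring_scope.

Definition G (u : 'I_n) (l : {ffun 'I_k -> 'I_n}) : R :=
  if [forall j, (x (l j) %| x u)%N] then
    \sum_(c : {ffun 'I_k -> 'I_n}) F (x u) (fun j => x (c j)) * \prod_j Mm (c j) (l j)
  else 0.

Lemma multi (h : {ffun 'I_k -> 'I_n} -> R) (d : {ffun 'I_k -> 'I_n}) :
  \sum_(l : {ffun 'I_k -> 'I_n}) (\sum_(c : {ffun 'I_k -> 'I_n}) h c * \prod_j Mm (c j) (l j)) * \prod_j Em (l j) (d j) = h d.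
Proof.
under eq_bigr => l _ do rewrite mulr_suml.
rewrite exchange_big /=.
under eq_bigr => c _ do under eq_bigr => l _ do rewrite -mulrA -big_split /=.
under eq_bigr => c _ do rewrite -mulr_sumr -(bigA_distr_bigA (fun j l0 => Mm (c j) l0 * Em l0 (d j))).
under eq_bigr => c _ do under eq_bigr => j _ do rewrite ME.
rewrite (bigD1 d) //= [X in _ + X]big1 ?addr0.
  by rewrite big1 ?mulr1 // => j _; rewrite eqxx.
move=> c cd; have [j hj] : exists j, c j != d j.
  apply/existsP; move: cd; apply: contraR; rewrite negb_exists => /forallP hh.
  by apply/eqP/ffunP => j; apply/eqP; have := hh j; rewrite negbK.
by rewrite (bigD1 j) //= (negbTE hj) mul0r mulr0.
Qed.

Lemma Dec (u : 'I_n) (b : 'I_k -> 'I_n) :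
  F (x u) (fun j => x (b j)) =
  \sum_(l : {ffun 'I_k -> 'I_n}) G u l * \prod_j Em (l j) (b j).
Proof.
set r := x u.
pose Phi := [ffun j => idx u (gcdn (x (b j)) r)].
have xPhi j : x (Phi j) = gcdn (x (b j)) r.
  by rewrite ffunE; apply: (@idx_dvd _ u); rewrite dvdn_gcdr.
have -> : F r (fun j => x (b j)) = F r (fun j => x (Phi j)).
  rewrite Fev [RHS]Fev; congr (F r); apply: functional_extensionality => j.
  by rewrite xPhi -gcdnA gcdnn.
rewrite -(multi (fun c => F r (fun j => x (c j))) Phi).
apply: eq_bigr => l _; rewrite /G.
case: (boolP [forall j, (x (l j) %| r)%N]) => [/forallP hl|/forallP hl].
  congr (_ * _); apply: eq_bigr => j _; rewrite /Em xPhi dvdn_gcd.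
  by rewrite hl andbT.
have [j hj] : exists j, ~~ (x (l j) %| r)%N.
  by apply/existsP; rewrite -negb_forall; apply/forallP.
rewrite mul0r (bigD1 j) //= /Em xPhi dvdn_gcd (negbTE hj) andbF.
by rewrite mul0r mulr0.
Qed.

Lemma ramanujan1 m : ramanujan m 1 = mobius m.
Proof. by rewrite /ramanujan gcdn1 /= big_seq1 divn1 mulr1. Qed.

Lemma Diag (u : 'I_n) :
  G u [ffun _ => u] = (x u)%:R ^+ k * alpha F (x u) (fun _ => x u).
Proof.
set r := x u; have r0 : (0 < r)%N := x_gt0 u.
rewrite /alpha mulrA mulfV ?mul1r ?expf_neq0 ?pnatr_eq0 -?lt0n //.
rewrite /G ifT; last by apply/forallP => j; rewrite ffunE.
under eq_bigr => c _ do under eq_bigr => j _ do rewrite ffunE.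
under [RHS]eq_bigr => d _ do under eq_bigr => j _ do rewrite divnn r0 ramanujan1.
rewrite (bigID (fun c : {ffun 'I_k -> 'I_n} => [forall j, (x (c j) %| r)%N])) /=.
rewrite [X in _ + X]big1 ?addr0; last first.
  move=> c /forallP hc.
  have [j hj] : exists j, ~~ (x (c j) %| r)%N.
    by apply/existsP; rewrite -negb_forall; apply/forallP.
  by rewrite (bigD1 j) //= /Mm (negbTE hj) mul0r mulr0.
rewrite [RHS](reindex_onto (fun c : {ffun 'I_k -> 'I_n} => [ffun j => inord (x (c j)) : 'I_r.+1])
   (fun d : {ffun 'I_k -> 'I_r.+1} => [ffun j => idx u (d j)])); last first.
  move=> d /forallP hd; apply/ffunP => j; rewrite !ffunE; apply: val_inj.
  have := hd j; case/andP => _ hdj.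
  by rewrite /= inordE (@idx_dvd _ u) // ltn_ord.
have hv (c : {ffun 'I_k -> 'I_n}) j : (x (c j) %| r)%N ->
    nat_of_ord ([ffun j => inord (x (c j)) : 'I_r.+1] j) = x (c j).
  by move=> h; rewrite ffunE inordE ifT // ltnS dvdn_leq.
apply: eq_big => [c|c /forallP hc].
  apply/idP/idP; last first.
    case/andP => /forallP h1 _; apply/forallP => j.
    have := h1 j; rewrite ffunE inordE.
    by case: ifP => _ /andP[].
  move=> /forallP hc; apply/andP; split.
    by apply/forallP => j; rewrite hv // x_gt0 hc.
  apply/eqP/ffunP => j; rewrite !ffunE.
  have hcj : (x (c j) < r.+1)%N by rewrite ltnS dvdn_leq.
  apply: xinj; rewrite (@idx_dvd _ u) inordE ?hcj //.
congr (_ * _).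
  by congr (F _); apply: functional_extensionality => j; rewrite hv.
by apply: eq_bigr => j _; rewrite hv ?hc // /Mm ifT; last exact: hc.
Qed.

Lemma perm_div_id (p : 'I_n -> 'I_n) : injective p ->
  (forall u, (x (p u) %| x u)%N) -> forall u, p u = u.
Proof.
move=> pinj hp.
have hle u : (x (p u) <= x u)%N by apply: dvdn_leq (x_gt0 u) (hp u).
have hs : (\sum_u x (p u) + \sum_u (x u - x (p u)) = \sum_u x u)%N.
  by rewrite -big_split /=; apply: eq_bigr => u _; rewrite subnKC.
have hs2 : (\sum_u x (p u) = \sum_u x u)%N by rewrite [RHS](reindex_inj pinj).
have /eqP : (\sum_u (x u - x (p u)) = 0)%N.
  by apply/eqP; rewrite -(eqn_add2l (\sum_u x (p u))) addn0 {2}hs2 hs.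
rewrite sum_nat_eq0 => /forallP h0 u; apply: xinj.
by apply/eqP; rewrite eqn_leq hle /= -subn_eq0; have := h0 u.
Qed.

Definition D := \sum_(tau : {ffun 'I_k -> {perm 'I_n}})
  (\prod_j (-1) ^+ odd_perm (tau j)) * \prod_u F (x u) (fun j => x (tau j u)).

Lemma detE1 : \det (\matrix_(u, b) Em u b) = 1.
Proof.
rewrite /determinant (bigD1 1%g) //= [X in _ + X]big1 ?addr0.
  rewrite odd_perm1 mul1r big1 // => u _; by rewrite mxE perm1 /Em dvdnn.
move=> s hs; apply/eqP; rewrite mulf_eq0; apply/orP; right.
have [u hu] : exists u, ~~ (x u %| x (s u))%N.
  apply/existsP; move: hs; apply: contraR; rewrite negb_exists => /forallP h.
  have hd u : (x u %| x (s u))%N by have := h u; rewrite negbK.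
  have hi : forall v, (s^-1)%g v = v.
    apply: perm_div_id; first exact: perm_inj.
    by move=> v; have := hd ((s^-1)%g v); rewrite permKV.
  by apply/eqP/permP => v; rewrite perm1 -{1}(hi v) permKV.
by apply/prodf_eq0; exists u => //; rewrite mxE /Em (negbTE hu).
Qed.

Definition MM (L : {ffun 'I_n -> {ffun 'I_k -> 'I_n}}) (j : 'I_k) : 'M[R]_n :=
  \matrix_(u, b) Em (L u j) b.

Lemma inner (L : {ffun 'I_n -> {ffun 'I_k -> 'I_n}}) :
  \sum_(tau : {ffun 'I_k -> {perm 'I_n}}) (\prod_j (-1) ^+ odd_perm (tau j)) *
     \prod_u (G u (L u) * \prod_j Em (L u j) (tau j u)) =
  (\prod_u G u (L u)) * \prod_j \det (MM L j).
Proof.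
rewrite (eq_bigr (fun tau : {ffun 'I_k -> {perm 'I_n}} => (\prod_u G u (L u)) * \prod_j ((-1) ^+ odd_perm (tau j) * \prod_u Em (L u j) (tau j u)))); last first.
  move=> tau _; rewrite big_split [in RHS]big_split /= mulrCA.
  by congr (_ * (_ * _)); exact: exchange_big.
rewrite -(mulr_sumr _ _ (fun tau : {ffun 'I_k -> {perm 'I_n}} => \prod_j ((-1) ^+ odd_perm (tau j) * \prod_u Em (L u j) (tau j u)))).
congr (_ * _).
rewrite /MM /determinant bigA_distr_bigA /=.
by apply: eq_bigr => tau _; apply: eq_bigr => j _; congr (_ * _); apply: eq_bigr => u _; rewrite mxE.
Qed.

Lemma DE : D = \prod_u G u [ffun _ => u].
Proof.
rewrite /D.
have hP (tau : {ffun 'I_k -> {perm 'I_n}}) : \prod_u F (x u) (fun j => x (tau j u)) =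
   \prod_u \sum_(l : {ffun 'I_k -> 'I_n}) G u l * \prod_j Em (l j) (tau j u).
  by apply: eq_bigr => u _; exact: (Dec u (fun j => tau j u)).
rewrite (eq_bigr (fun tau : {ffun 'I_k -> {perm 'I_n}} => (\prod_j (-1) ^+ odd_perm (tau j)) *
   \prod_u \sum_(l : {ffun 'I_k -> 'I_n}) G u l * \prod_j Em (l j) (tau j u))); last first.
  by move=> tau _; congr (_ * _); exact: hP.
under eq_bigr => tau _ do rewrite bigA_distr_bigA mulr_sumr.
rewrite exchange_big /=.
under eq_bigr => L _ do rewrite inner.
pose Ld : {ffun 'I_n -> {ffun 'I_k -> 'I_n}} := [ffun u => [ffun _ => u]].
rewrite (bigD1 Ld) //= [X in _ + X]big1 ?addr0.
  have hM j : MM Ld j = \matrix_(u, b) Em u b.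
    by apply/matrixP => u b; rewrite !mxE !ffunE.
  rewrite [X in _ * X]big1 ?mulr1; last by move=> j _; rewrite hM detE1.
  by apply: eq_bigr => u _; rewrite ffunE.
move=> L hL.
case: (eqVneq (\prod_j \det (MM L j)) 0) => [->|hd]; first by rewrite mulr0.
case: (eqVneq (\prod_u G u (L u)) 0) => [->|hg]; first by rewrite mul0r.
exfalso; move: hL; apply/negP; rewrite negbK; apply/eqP.
have hG u j : (x (L u j) %| x u)%N.
  have := (prodf_neq0 _ _ hg) u isT; rewrite /G.
  by case: ifP => [/forallP h _|_]; [exact: h | rewrite eqxx].
have hD j : \det (MM L j) != 0 by exact: (prodf_neq0 _ _ hd) j isT.
have hinj j : injective (fun u => L u j).
  move=> u1 u2 /= e; case: (eqVneq u1 u2) => // hne.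
  by have := hD j; rewrite (determinant_alternate hne) ?eqxx // => v; rewrite !mxE e.
apply/ffunP => u; apply/ffunP => j; rewrite !ffunE.
exact: (perm_div_id (hinj j) (fun u => hG u j)).
Qed.

Lemma sign_cancel (b : bool) :
  (if odd k then (-1) ^+ b else 1) * ((-1) ^+ b) ^+ k = 1 :> R.
Proof.
case: b; last by rewrite expr0 expr1n; case: (odd k); rewrite mulr1.
rewrite expr1 -signr_odd; case: (odd k); rewrite /= ?expr1 ?expr0 ?mulr1 //.
by rewrite mulrNN mulr1.
Qed.

Lemma HD : hyperdet (fun j : 'I_k.+1 => odd k || (0 < j)%N)
    (fun i : 'I_k.+1 -> 'I_n =>
       F (x (i ord0)) (fun j : 'I_k => x (i (lift ord0 j)))) = D.
Proof.
rewrite /hyperdet.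
pose Psi (p : {perm 'I_n} * {ffun 'I_k -> {perm 'I_n}}) : {ffun 'I_k.+1 -> {perm 'I_n}} :=
  [ffun j => if unlift ord0 j is Some j' then (p.1 * p.2 j')%g else p.1].
pose Psiinv (sg : {ffun 'I_k.+1 -> {perm 'I_n}}) : {perm 'I_n} * {ffun 'I_k -> {perm 'I_n}} :=
  (sg ord0, [ffun j => ((sg ord0)^-1 * sg (lift ord0 j))%g]).
rewrite (reindex Psi); last first.
  apply: onW_bij; exists Psiinv.
    case=> s t; rewrite /Psiinv /Psi ffunE unlift_none; congr pair.
    by apply/ffunP => j; rewrite !ffunE liftK mulKg.
  move=> sg; apply/ffunP => j; rewrite ffunE.
  by case: unliftP => [j' ->|->] /=; rewrite ?ffunE ?mulKVg.
pose T (t : {ffun 'I_k -> {perm 'I_n}}) :=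
  (\prod_j (-1) ^+ odd_perm (t j)) * \prod_u F (x u) (fun j => x (t j u)).
rewrite (eq_bigr (fun p => T p.2)); last first.
  case=> s t _ /=; rewrite /T big_ord_recl /= /Psi !ffunE unlift_none /=.
  under eq_bigr => j _ do rewrite ffunE liftK odd_permM signr_addb ifT ?orbT //.
  rewrite big_split /= prodr_const card_ord ?ltnn ?orbF mulrA sign_cancel mul1r.
  congr (_ * _).
  rewrite [RHS](reindex_inj (@perm_inj _ s)) /=.
  apply: eq_bigr => v _.
  congr (F _); apply: functional_extensionality => j.
  by rewrite ffunE liftK permM.
rewrite -(pair_bigA _ (fun _ t => T t)) /= sumr_const card_Sn.
set c := (n`!)%:R; rewrite -mulr_natl mulrA mulVf ?mul1r; first by []. 
by rewrite /c pnatr_eq0 -lt0n fact_gt0.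
Qed.
End S.

Unset Implicit Arguments.
Local Open Scope ring_scope.

Theorem theorem4p6 (R : numFieldType) (n : nat) (x : 'I_n -> nat)
  (k : nat) (F : nat -> ('I_k -> nat) -> R) :
  injective x -> factor_closed x -> even_mod F ->
  hyperdet (fun j : 'I_k.+1 => odd k || (0 < j)%N)
    (fun i : 'I_k.+1 -> 'I_n =>
       F (x (i ord0)) (fun j : 'I_k => x (i (lift ord0 j)))) =
  ((\prod_(v < n) x v)%N%:R) ^+ k *
  \prod_(v < n) alpha F (x v) (fun _ => x v).
Proof.
move=> xinj xfc Fev.
transitivity (D x F); first exact: HD.
rewrite (DE xinj xfc Fev).
under eq_bigr => u _ do rewrite (Diag xinj xfc F u).
by rewrite big_split /= prodrXl natr_prod.
Qed.
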